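(* Let $\tilde c(n)$ be the number of (isomorphism classes of) trees $T\in\mathcal{T}_n$ with $\mathcal{C}(T)=c_n$. Then $\tilde c(1)=1$ and for every $n\ge2$, $$\tilde c(n)=\sum_{(n_a,n_b)\in\widetilde{QB}(n)}\tilde c(n_a)\,\tilde c(n_b)+\binom{\tilde c(n/2)+1}{2}\,\delta_{even}(n),$$ where $\widetilde{QB}(n)=\{(n_a,n_b)\in QB(n): n_a>n_b\}$ and $\delta_{even}(n)=1$ if $n$ is even and $0$ otherwise.
   Context: Bifurcating trees: rooted trees in which every internal node has exactly two children; $\mathcal{T}_n$ is the set of isomorphism classes of bifurcating trees with $n$ leaves. The Colless index is $\mathcal{C}(T)=\sum_{v}|\kappa_T(v_1)-\kappa_T(v_2)|$, summed over internal nodes $v$ with children $v_1,v_2$, where $\kappa_T(w)$ is the number of leaves descending from $w$; $c_n=\min\{\mathcal{C}(T):T\in\mathcal{T}_n\}$. For $n\ge2$, $QB(n)=\{(n_a,n_b)\in\mathbb{N}^2: n_a\ge n_b\ge1,\ n_a+n_b=n,\ c_{n_a}+c_{n_b}+n_a-n_b=c_n\}$. *)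

(* Defs.v *)
From mathcomp Require Import all_boot.
Set Implicit Arguments. Unset Strict Implicit. Unset Printing Implicit Defensive.

(* Rooted bifurcating trees (ordered representation; isomorphism below). *)
Inductive tree := Leaf | Node of tree & tree.

Fixpoint leaves (t : tree) : nat :=
  match t with Leaf => 1 | Node l r => leaves l + leaves r end.

Fixpoint colless (t : tree) : nat :=
  match t with
  | Leaf => 0
  | Node l r => colless l + colless r + (maxn (leaves l) (leaves r) - minn (leaves l) (leaves r))
  end.

Fixpoint iso (s t : tree) : bool :=
  match s, t with
  | Leaf, Leaf => true
  | Node a b, Node c d => (iso a c && iso b d) || (iso a d && iso b c)
  | _, _ => false
  end.

Fixpoint all_trees (d : nat) : seq tree :=
  match d with
  | 0 => [:: Leaf]
  | d'.+1 => Leaf :: [seq Node l r | l <- all_trees d', r <- all_trees d']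
  end.

(* All ordered trees with n leaves (such a tree has depth < n). *)
Definition trees_n (n : nat) : seq tree :=
  [seq t <- all_trees n | leaves t == n].

(* c_n = min Colless index over T_n (n >= 1). *)
Definition cmin (n : nat) : nat :=
  foldr minn (colless (head Leaf (trees_n n))) [seq colless t | t <- trees_n n].

(* One representative per equivalence class of r in s (r an equivalence). *)
Definition reps (T : Type) (r : T -> T -> bool) (s : seq T) : seq T :=
  foldr (fun x acc => if has (r x) acc then acc else x :: acc) [::] s.

Definition ctilde (n : nat) : nat :=
  size (reps iso [seq t <- trees_n n | colless t == cmin n]).

Definition QB (n : nat) (p : nat * nat) : bool :=
  [&& p.1 >= p.2, p.2 >= 1, p.1 + p.2 == n & cmin p.1 + cmin p.2 + p.1 - p.2 == cmin n].

Definition QBt (n : nat) (p : nat * nat) : bool := QB n p && (p.1 > p.2).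

Definition delta_even (n : nat) : nat := if odd n then 0 else 1.

(* Main.v *)
Require Import Defs.
From mathcomp Require Import all_boot.
From HB Require Import structures.
From mathcomp Require Import zify.

Fixpoint t2g (t : tree) : GenTree.tree unit :=
  match t with Leaf => GenTree.Leaf tt | Node l r => GenTree.Node 0 [:: t2g l; t2g r] end.
Fixpoint g2t (g : GenTree.tree unit) : option tree :=
  match g with
  | GenTree.Leaf _ => Some Leaf
  | GenTree.Node _ [:: a; b] =>
      match g2t a, g2t b with Some x, Some y => Some (Node x y) | _, _ => None end
  | _ => None end.
Lemma t2gK : pcancel t2g g2t.
Proof. by elim=> [|l IHl r IHr] //=; rewrite IHl IHr. Qed.
HB.instance Definition _ := Countable.copy tree (pcan_type t2gK).

Definition key (t : tree) : nat := pickle t.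
Lemma key_inj : injective key. Proof. exact: (pcan_inj pickleK). Qed.

Fixpoint depth (t : tree) : nat :=
  match t with Leaf => 0 | Node l r => (maxn (depth l) (depth r)).+1 end.

Lemma leaves_gt0 t : 0 < leaves t.
Proof. elim: t => //= l IHl r IHr; lia. Qed.

Lemma depth_lt t : depth t < leaves t.
Proof. elim: t => //= l IHl r IHr; have := leaves_gt0 l; have := leaves_gt0 r; lia. Qed.

Lemma mem_all_trees d t : depth t <= d -> t \in all_trees d.
Proof.
elim: d t => [|d IH] [|l r] /=; rewrite ?inE ?eqxx //.
move=> h; apply/orP; right; apply: allpairs_f; apply: IH; lia.
Qed.

Lemma mem_trees_n n t : (t \in trees_n n) = (leaves t == n).
Proof.
rewrite mem_filter; case: eqP => //= <-; apply: mem_all_trees.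
have := depth_lt t; lia.
Qed.

Fixpoint cat_tree k := match k with 0 => Leaf | k'.+1 => Node (cat_tree k') Leaf end.
Lemma leaves_cat k : leaves (cat_tree k) = k.+1.
Proof. elim: k => //= k ->; lia. Qed.

Lemma foldr_minn_le x0 s y : y \in s -> foldr minn x0 s <= y.
Proof.
elim: s => //= x s IH; rewrite inE => /orP [/eqP ->|/IH h]; first exact: geq_minl.
exact: leq_trans (geq_minr _ _) h.
Qed.

Lemma foldr_minn_in x0 s : foldr minn x0 s \in x0 :: s.
Proof.
elim: s => [|x s IH] /=; first by rewrite inE.
rewrite /minn; case: ifP => _; first by rewrite !inE eqxx orbT.
move: IH; rewrite !inE => /orP [->|->] //; by rewrite !orbT.
Qed.

Lemma cmin_le t : cmin (leaves t) <= colless t.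
Proof.
apply: foldr_minn_le; apply: map_f; by rewrite mem_trees_n.
Qed.

Lemma cmin_ex n : 0 < n -> exists t, leaves t = n /\ colless t = cmin n.
Proof.
move=> n0.
have hm : cat_tree n.-1 \in trees_n n by rewrite mem_trees_n leaves_cat prednK.
have : cmin n \in [seq colless t | t <- trees_n n].
  move: (foldr_minn_in (colless (head Leaf (trees_n n))) [seq colless t | t <- trees_n n]).
  rewrite -/(cmin n) inE => /orP [/eqP ->|//].
  case: (trees_n n) hm => //= t0 ts _; by rewrite inE eqxx.
case/mapP => t; rewrite mem_trees_n => /eqP h1 h2; by exists t.
Qed.

Lemma cmin0 : cmin 0 = 0. Proof. by vm_compute. Qed.
Lemma cmin1 : cmin 1 = 0. Proof. by vm_compute. Qed.

Lemma sub_add x y : cmin (x + y) <= cmin x + cmin y + (maxn x y - minn x y).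
Proof.
case: (posnP x) => [->|hx0]; first by rewrite add0n cmin0; lia.
case: (posnP y) => [->|hy0]; first by rewrite addn0 cmin0; lia.
have [tx [lx cx]] := cmin_ex _ hx0; have [ty [ly cy]] := cmin_ex _ hy0.
have := cmin_le (Node tx ty); by rewrite /= lx ly cx cy.
Qed.

Lemma parity a : exists i, a = i.*2 \/ a = i.*2.+1.
Proof. exists a./2; have := odd_double_half a; case: (odd a) => /= h; [right|left]; lia. Qed.

Definition HP (a C : nat) :=
  (forall i, a = i.*2 -> cmin i + cmin i <= C) /\
  (forall i, a = i.*2.+1 -> cmin i.+1 + cmin i + (0 < i) <= C).

Lemma hstep_oe p q Ca Cb : 0 < q -> HP p.*2.+1 Ca -> HP q.*2 Cb ->
  HP (p.*2.+1 + q.*2) (Ca + Cb + (maxn p.*2.+1 q.*2 - minn p.*2.+1 q.*2)).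
Proof.
move=> q0 [_ Ha] [Hb _]; have {}Ha := Ha p erefl; have {}Hb := Hb q erefl.
split=> i hi; first lia.
have -> : i = p + q by lia.
case: (posnP p) => [p0|p0].
  subst p; rewrite add0n in Ha *; rewrite cmin1 cmin0 in Ha.
  have := sub_add 1 q; rewrite add1n cmin1; lia.
have h1 := sub_add p.+1 q; have h2 := sub_add p q; rewrite addSn in h1; lia.
Qed.

Lemma halving t : HP (leaves t) (colless t).
Proof.
elim: t => [|l IHl r IHr].
  split=> i /= hi; first lia.
  have -> : i = 0 by lia. by rewrite cmin1 cmin0.
rewrite /=; have la := leaves_gt0 l; have lb := leaves_gt0 r.
move: la lb IHl IHr; set a := leaves l; set b := leaves r.
have [p [->|->]] := parity a; have [q [->|->]] := parity b => la lb IHl IHr.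
- case: IHl => Ha _; case: IHr => Hb _; have {}Ha := Ha p erefl; have {}Hb := Hb q erefl.
  split=> i hi; last lia.
  have -> : i = p + q by lia.
  have := sub_add p q; lia.
- rewrite addnC maxnC minnC [colless l + _]addnC.
  apply: hstep_oe => //; lia.
- apply: hstep_oe => //; lia.
- case: IHl => _ Ha; case: IHr => _ Hb; have {}Ha := Ha p erefl; have {}Hb := Hb q erefl.
  split=> i hi; last lia.
  have -> : i = (p + q).+1 by lia.
  case: (posnP p) => [p0|p0]; case: (posnP q) => [q0|q0].
  + subst p q; rewrite cmin1; lia.
  all: have h1 := sub_add p.+1 q; have h2 := sub_add p q.+1; rewrite addSn in h1; rewrite addnS in h2; lia.
Qed.

Lemma cmin_double m : 0 < m -> cmin m.*2 = cmin m + cmin m.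
Proof.
move=> m0; apply/eqP; rewrite eqn_leq; apply/andP; split.
  have := sub_add m m; rewrite addnn maxnn minnn subnn addn0; done.
have m2 : 0 < m.*2 by lia.
have [t [lt ct]] := cmin_ex _ m2.
have [h _] := halving t; rewrite -ct; exact: h.
Qed.

Definition canonN (x y : tree) := if key y <= key x then Node x y else Node y x.
Fixpoint canon t := match t with Leaf => Leaf | Node l r => canonN (canon l) (canon r) end.

Lemma canonNE x y : canonN x y = Node x y \/ canonN x y = Node y x.
Proof. rewrite /canonN; case: ifP; by [left|right]. Qed.

Lemma canonNC x y : canonN x y = canonN y x.
Proof.
rewrite /canonN; case: (leqP (key y) (key x)) => h1; case: (leqP (key x) (key y)) => h2 //.
- by have /key_inj -> : key x = key y by lia.
- lia.
Qed.

Lemma canonN_inj x y u v : canonN x y = canonN u v -> (x = u /\ y = v) \/ (x = v /\ y = u).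
Proof.
by case: (canonNE x y) => ->; case: (canonNE u v) => -> [-> ->]; auto.
Qed.

Lemma iso_canon s t : iso s t = (canon s == canon t).
Proof.
elim: s t => [|a IHa b IHb] [|c d] /=.
- by [].
- by case: (canonNE (canon c) (canon d)) => ->.
- by case: (canonNE (canon a) (canon b)) => ->.
rewrite IHa IHb IHa IHb; apply/idP/eqP.
  case/orP => /andP [/eqP -> /eqP ->] //; exact: canonNC.
by case/canonN_inj => [[-> ->]|[-> ->]]; rewrite !eqxx ?orbT.
Qed.

Lemma canon_idem t : canon (canon t) = canon t.
Proof.
elim: t => //= l IHl r IHr.
case: (canonNE (canon l) (canon r)) => e; rewrite {1}e /= IHl IHr //; exact: canonNC.
Qed.

Lemma leaves_canon t : leaves (canon t) = leaves t.
Proof.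
elim: t => //= l IHl r IHr.
case: (canonNE (canon l) (canon r)) => -> /=; rewrite IHl IHr //; exact: addnC.
Qed.

Lemma colless_canon t : colless (canon t) = colless t.
Proof.
elim: t => //= l IHl r IHr.
case: (canonNE (canon l) (canon r)) => -> /=; rewrite !leaves_canon IHl IHr //.
rewrite maxnC minnC; lia.
Qed.

Lemma canon_node x y : canon (Node x y) = Node x y -> [/\ canon x = x, canon y = y & key y <= key x].
Proof.
rewrite /= /canonN; case: ifP => h [e1 e2].
  by rewrite e1 e2 in h.
have exy : x = y by rewrite -e1 -e2 canon_idem.
rewrite -exy in e1 e2 *; by rewrite e2.
Qed.

Lemma canon_canonN x y : canon x = x -> canon y = y -> canon (canonN x y) = canonN x y.
Proof.
move=> hx hy; case: (canonNE x y) => e; rewrite {1}e /= hx hy //; exact: canonNC.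
Qed.

Lemma reps_size (T U : eqType) (r : T -> T -> bool) (f : T -> U) s :
  (forall x y, r x y = (f x == f y)) -> size (reps r s) = size (undup (map f s)).
Proof.
move=> hr.
have key : uniq (map f (reps r s)) /\ (map f (reps r s) =i map f s).
  elim: s => [|x s [IH1 IH2]] //=.
  have -> : has (r x) (reps r s) = (f x \in map f (reps r s)).
    apply/hasP/mapP => [[y hy]|[y hy] e].
      by rewrite hr => /eqP e; exists y.
    by exists y; rewrite // hr e.
  case: ifP => h /=.
    split => // z; rewrite inE IH2; case: eqP => // ->; by rewrite -IH2 h.
  rewrite h IH1; split => // z; by rewrite !inE IH2.
case: key => h1 h2.
rewrite -(size_map f); apply: perm_size; apply: uniq_perm => //.
  exact: undup_uniq.
by move=> z; rewrite mem_undup h2.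
Qed.

Lemma node_min x y : colless (Node x y) = cmin (leaves x + leaves y) ->
  [/\ colless x = cmin (leaves x), colless y = cmin (leaves y) &
      cmin (leaves x) + cmin (leaves y) + (maxn (leaves x) (leaves y) - minn (leaves x) (leaves y)) = cmin (leaves x + leaves y)].
Proof.
rewrite /= => h; have := cmin_le x; have := cmin_le y; have := sub_add (leaves x) (leaves y).
split; lia.
Qed.

Definition Mp n t := [&& canon t == t, leaves t == n & colless t == cmin n].
Definition M n := undup [seq canon t | t <- [seq t <- trees_n n | colless t == cmin n]].

Lemma ctildeE n : ctilde n = size (M n).
Proof. apply: reps_size; exact: iso_canon. Qed.

Lemma mem_M n t : (t \in M n) = Mp n t.
Proof.
rewrite mem_undup; apply/mapP/idP.
  case=> s; rewrite mem_filter mem_trees_n => /andP [/eqP cs /eqP ls] ->.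
  by rewrite /Mp canon_idem leaves_canon colless_canon ls cs !eqxx.
case/and3P => /eqP ct /eqP lt /eqP cl; exists t => //.
by rewrite mem_filter mem_trees_n lt cl !eqxx.
Qed.

Lemma uniq_flatten_lab (I T : eqType) (lab : T -> I) (s : seq I) (F : I -> seq T) :
  uniq s -> (forall i, i \in s -> uniq (F i)) ->
  (forall i x, i \in s -> x \in F i -> lab x = i) -> uniq (flatten [seq F i | i <- s]).
Proof.
elim: s => //= i s IH /andP [ni us] hu hl.
rewrite cat_uniq hu ?inE ?eqxx //= IH //; last first.
- by move=> j x js; apply: hl; rewrite inE js orbT.
- by move=> j js; apply: hu; rewrite inE js orbT.
rewrite andbT; apply/hasP => -[x /flatten_mapP [j js xj] xi].
have js' : j \in i :: s by rewrite inE js orbT.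
have e1 := hl i x (mem_head _ _) xi; have e2 := hl j x js' xj.
by move: ni; rewrite -e1 e2 js.
Qed.

Lemma size_flatten_map (I T : Type) (s : seq I) (F : I -> seq T) :
  size (flatten [seq F i | i <- s]) = \sum_(i <- s) size (F i).
Proof. elim: s => [|i s IH] /=; by rewrite ?big_nil ?big_cons ?size_cat ?IH. Qed.

Definition ch1 t := if t is Node x _ then x else Leaf.
Definition ch2 t := if t is Node _ y then y else Leaf.
Definition labA t := maxn (leaves (ch1 t)) (leaves (ch2 t)).
Definition labB t := minn (leaves (ch1 t)) (leaves (ch2 t)).
Definition bigc t := if leaves (ch2 t) <= leaves (ch1 t) then ch1 t else ch2 t.

Lemma canonN_labs l r : leaves r < leaves l ->
  [/\ labA (canonN l r) = leaves l, labB (canonN l r) = leaves r & bigc (canonN l r) = l].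
Proof.
move=> h; rewrite /labA /labB /bigc.
have h' : leaves r <= leaves l by lia.
case: (canonNE l r) => -> /=; [rewrite h'|rewrite leqNgt h /=]; split => //; lia.
Qed.

Lemma leaves_canonN l r : leaves (canonN l r) = leaves l + leaves r.
Proof. case: (canonNE l r) => -> //=; exact: addnC. Qed.

Lemma colless_canonN l r : colless (canonN l r) = colless (Node l r).
Proof. case: (canonNE l r) => -> //=; rewrite maxnC minnC; lia. Qed.

Definition blk n na nb :=
  if QBt n (na, nb) then flatten [seq [seq canonN l r | r <- M nb] | l <- M na] else [::].
Definition Al n := flatten [seq flatten [seq blk n na nb | nb <- index_iota 0 n.+1] | na <- index_iota 0 n.+1].
Definition El n := if odd n then [::] else
  flatten [seq [seq Node x y | y <- [seq y <- M n./2 | key y <= key x]] | x <- M n./2].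

Lemma QBtP n na nb : QBt n (na, nb) ->
  [/\ nb < na, 0 < nb, na + nb = n & cmin na + cmin nb + (na - nb) = cmin n].
Proof. rewrite /QBt /QB /=. by case/andP => /and4P [h1 h2 /eqP h3 /eqP h4] h5 /=; split => //; lia. Qed.

Lemma mem_blk n na nb t : t \in blk n na nb ->
  QBt n (na, nb) /\ exists l r, [/\ l \in M na, r \in M nb & t = canonN l r].
Proof.
rewrite /blk; case: ifP => // q /flatten_mapP [l hl /mapP [r hr ->]].
split => //; by exists l, r.
Qed.

Lemma mem_Al n t : t \in Al n ->
  exists na nb l r, [/\ QBt n (na, nb), l \in M na, r \in M nb & t = canonN l r].
Proof.
case/flatten_mapP => na _ /flatten_mapP [nb _ /mem_blk [q [l [r [hl hr ->]]]]].
by exists na, nb, l, r.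
Qed.

Lemma labs_Al n t : t \in Al n -> labB t < labA t.
Proof.
case/mem_Al => na [nb [l [r [q hl hr ->]]]].
have [h1 _ _ _] := QBtP _ _ _ q.
move: hl hr; rewrite !mem_M => /and3P [_ /eqP ll _] /and3P [_ /eqP lr _].
have hlr : leaves r < leaves l by lia.
    have [-> -> _] := canonN_labs l r hlr; lia.
Qed.

Lemma uniq_Al n : uniq (Al n).
Proof.
apply: (@uniq_flatten_lab _ _ labA); first exact: iota_uniq.
  move=> na _; apply: (@uniq_flatten_lab _ _ labB); first exact: iota_uniq.
    move=> nb _; rewrite /blk; case: ifP => // q.
    have [h1 _ _ _] := QBtP _ _ _ q.
    apply: (@uniq_flatten_lab _ _ bigc); first exact: undup_uniq.
      move=> l _; rewrite map_inj_in_uniq; first exact: undup_uniq.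
      by move=> r1 r2 _ _ /canonN_inj [[_ ->]|[<- ->]].
    move=> l x hl /mapP [r hr ->].
    move: hl hr; rewrite !mem_M => /and3P [_ /eqP ll _] /and3P [_ /eqP lr _].
    have hlr : leaves r < leaves l by lia.
    have [_ _ ->] := canonN_labs l r hlr; done.
  move=> nb x _ /mem_blk [q [l [r [hl hr ->]]]].
  have [h1 _ _ _] := QBtP _ _ _ q.
  move: hl hr; rewrite !mem_M => /and3P [_ /eqP ll _] /and3P [_ /eqP lr _].
  have hlr : leaves r < leaves l by lia.
    have [_ -> _] := canonN_labs l r hlr; lia.
move=> na x _ /flatten_mapP [nb _ /mem_blk [q [l [r [hl hr ->]]]]].
have [h1 _ _ _] := QBtP _ _ _ q.
move: hl hr; rewrite !mem_M => /and3P [_ /eqP ll _] /and3P [_ /eqP lr _].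
have hlr : leaves r < leaves l by lia.
    have [-> _ _] := canonN_labs l r hlr; lia.
Qed.

Lemma mem_El n t : t \in El n ->
  [/\ ~~ odd n & exists x y, [/\ x \in M n./2, y \in M n./2, key y <= key x & t = Node x y]].
Proof.
rewrite /El; case: ifP => // hn /flatten_mapP [x hx /mapP [y]].
rewrite mem_filter => /andP [hk hy] ->; split => //; by exists x, y.
Qed.

Lemma uniq_El n : uniq (El n).
Proof.
rewrite /El; case: ifP => // _.
apply: (@uniq_flatten_lab _ _ ch1); first exact: undup_uniq.
  move=> x _; rewrite map_inj_uniq; last by move=> ? ? [].
  apply: filter_uniq; exact: undup_uniq.
by move=> x t _ /mapP [y _ ->].
Qed.

Lemma MpE n t : Mp n t -> [/\ canon t = t, leaves t = n & colless t = cmin n].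
Proof. by case/and3P => /eqP -> /eqP -> /eqP ->. Qed.

Lemma AE_sub n t : 2 <= n -> t \in Al n ++ El n -> Mp n t.
Proof.
move=> n2; rewrite mem_cat => /orP [/mem_Al [na [nb [l [r [q hl hr ->]]]]]|].
  have [h1 h2 h3 h4] := QBtP _ _ _ q.
  move: hl hr; rewrite !mem_M => /MpE [cl ll kl] /MpE [cr lr kr].
  rewrite /Mp canon_canonN // leaves_canonN colless_canonN /= ll lr kl kr eqxx h3 eqxx /=.
  apply/eqP; rewrite -h4; lia.
case/mem_El => hn [x [y [hx hy hk ->]]].
move: hx hy; rewrite !mem_M => /MpE [cx lx kx] /MpE [cy ly ky].
have hn2 : n = (n./2).*2 by have := odd_double_half n; rewrite (negbTE hn) /= add0n.
have m0 : 0 < n./2 by lia.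
rewrite /Mp /= cx cy /canonN hk eqxx lx ly kx ky /=.
rewrite maxnn minnn subnn addn0 -cmin_double // -hn2 !eqxx andbT; apply/eqP; lia.
Qed.

Lemma AE_sup n t : 2 <= n -> Mp n t -> t \in Al n ++ El n.
Proof.
move=> n2 /MpE [ct lt kt].
case: t ct lt kt => [|x y] ct lt kt; first by rewrite /= in lt; lia.
have [cx cy hk] := canon_node _ _ ct.
rewrite /= in lt; rewrite -lt in kt.
have [kx ky heq] := node_min _ _ kt.
have Mx : x \in M (leaves x) by rewrite mem_M /Mp cx kx !eqxx.
have My : y \in M (leaves y) by rewrite mem_M /Mp cy ky !eqxx.
have lx := leaves_gt0 x; have ly := leaves_gt0 y.
rewrite mem_cat; case: (ltngtP (leaves x) (leaves y)) => hxy.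
- apply/orP; left; apply/flatten_mapP; exists (leaves y); first by rewrite mem_index_iota; lia.
  apply/flatten_mapP; exists (leaves x); first by rewrite mem_index_iota; lia.
  have q : QBt n (leaves y, leaves x).
    rewrite /QBt /QB /= -lt; apply/andP; split; last done.
    apply/and4P; split; try (apply/eqP); lia.
  rewrite /blk q; apply/flatten_mapP; exists y => //; apply/mapP; exists x => //.
  rewrite /canonN; case: ifP => // h.
  have exy : x = y by apply: key_inj; lia.
  by rewrite exy ltnn in hxy.
- apply/orP; left; apply/flatten_mapP; exists (leaves x); first by rewrite mem_index_iota; lia.
  apply/flatten_mapP; exists (leaves y); first by rewrite mem_index_iota; lia.
  have q : QBt n (leaves x, leaves y).
    rewrite /QBt /QB /= -lt; apply/andP; split; last done.
    apply/and4P; split; try (apply/eqP); lia.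
  rewrite /blk q; apply/flatten_mapP; exists x => //; apply/mapP; exists y => //.
  by rewrite /canonN hk.
- apply/orP; right; rewrite /El.
  have -> : odd n = false by rewrite -lt hxy addnn odd_double.
  have hm : n./2 = leaves x by rewrite -lt hxy addnn doubleK.
  rewrite hm; apply/flatten_mapP; exists x => //; apply/mapP; exists y => //.
  by rewrite mem_filter hk hxy.
Qed.

Lemma size_blk n na nb : size (blk n na nb) = if QBt n (na, nb) then ctilde na * ctilde nb else 0.
Proof.
rewrite /blk !ctildeE; case: ifP => // _.
elim: (M na) => //= l s IH; by rewrite size_cat size_map IH mulSn.
Qed.

Lemma count_sum_key x s : \sum_(z <- s) (key x <= key z) = count (fun z => key x <= key z) s.
Proof. elim: s => [|z s IH] /=; by rewrite ?big_nil ?big_cons ?IH. Qed.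

Lemma cnt2 x s : x \notin s ->
  count (fun y => key y <= key x) s + count (fun y => key x <= key y) s = size s.
Proof.
elim: s => //= z s IH; rewrite inE negb_or => /andP [nz ns].
have := IH ns; have : key z != key x.
  apply/eqP => /key_inj e; by rewrite e eqxx in nz.
lia.
Qed.

Lemma pairs_count (s : seq tree) : uniq s ->
  \sum_(x <- s) count (fun y => key y <= key x) s = 'C(size s + 1, 2).
Proof.
elim: s => [|x s IH] /=; first by rewrite big_nil.
case/andP => nx us; rewrite big_cons leqnn /=.
rewrite (eq_bigr (fun z => (key x <= key z) + count (fun y => key y <= key z) s)) //.
rewrite big_split /= IH // count_sum_key.
have := cnt2 _ _ nx; rewrite !addn1 => h; rewrite [X in _ = X]binS bin1; rewrite -h; set c1 := count _ _; set c2 := count _ _; lia.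
Qed.

Lemma size_El n : size (El n) = 'C(ctilde n./2 + 1, 2) * delta_even n.
Proof.
rewrite /El /delta_even; case: ifP => _; first by rewrite muln0.
rewrite muln1 size_flatten_map ctildeE -pairs_count ?undup_uniq //.
by apply: eq_bigr => x _; rewrite size_map size_filter.
Qed.

Theorem proposition4 :
  ctilde 1 = 1 /\
  forall n : nat, 2 <= n ->
    ctilde n =
      \sum_(na < n.+1) \sum_(nb < n.+1 | QBt n (nat_of_ord na, nat_of_ord nb))
          ctilde na * ctilde nb
      + 'C(ctilde (n./2) + 1, 2) * delta_even n.
Proof.
split; first by vm_compute.
move=> n n2.
have -> : ctilde n = size (Al n ++ El n).
  rewrite ctildeE; apply: perm_size; apply: uniq_perm.
  - exact: undup_uniq.
  - rewrite cat_uniq uniq_Al uniq_El /= andbT; apply/hasP => -[t /mem_El [hn [x [y [hx hy _ ->]]]]].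
    move=> /labs_Al; move: hx hy; rewrite !mem_M /labA /labB /= => /MpE [_ -> _] /MpE [_ -> _].
    by rewrite maxnn minnn ltnn.
  - move=> t; rewrite mem_M; apply/idP/idP; [exact: AE_sup | exact: AE_sub].
rewrite size_cat size_El; congr (_ + _).
rewrite /Al size_flatten_map big_mkord; apply: eq_bigr => na _.
rewrite size_flatten_map big_mkord [in RHS]big_mkcond; apply: eq_bigr => nb _.
exact: size_blk.
Qed.
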